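(* Let $G$ be an edge-magic $(p,q)$-graph and $n\ge 1$. Let $\alpha$ and $\beta$ be the smallest and the largest valences of edge-magic labelings of $G$, respectively, and suppose $\beta-\alpha<(\alpha-(p+q+2))\,n$. Then for any orientations $\overrightarrow{G}$ of $G$ and $\overrightarrow{K}_{1,n}^l$ of $K_{1,n}^l$, $$|\tau_{\overrightarrow{G}\otimes\overrightarrow{K}_{1,n}^l}|\ \ge\ (n+3)\,|\tau_{G}|.$$
   Context: Graphs may have loops and multiple edges. A $(p,q)$-graph has $p$ vertices and $q$ edges. An edge-magic labeling of a $(p,q)$-graph $G$ is a bijection $f:V(G)\cup E(G)\to[1,p+q]$ such that $f(x)+f(xy)+f(y)$ equals a constant $\mathrm{val}(f)$ (the valence) for every edge $xy$; $G$ is edge-magic if it has one. For a graph $H$, the magic set $\tau_H$ is the set of integers that are valences of edge-magic labelings of $H$; for a digraph, $\tau$ refers to its underlying graph. $K_{1,n}^l$ is the star $K_{1,n}$ with a loop attached at its central vertex. For digraphs $D$ and $F$, $D\otimes F$ is the digraph with vertex set $V(D)\times V(F)$ and arcs $((a,i),(b,j))$ for every arc $(a,b)$ of $D$ and arc $(i,j)$ of $F$ (loops allowed). *)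

(* Defs.v *)
From mathcomp Require Import all_boot.
From Stdlib Require Import ClassicalEpsilon.
Set Implicit Arguments. Unset Strict Implicit. Unset Printing Implicit Defensive.

(* A (multi)graph with loops: finite vertex type V, finite edge type E, and
   each edge e has endpoints (ends e).1, (ends e).2 (a loop when equal).
   The same data read as ordered pairs is a digraph: arc e goes from
   (ends e).1 to (ends e).2. p = #|V|, q = #|E|. *)

Definition edge_magic {V E : finType} (ends : E -> V * V) (f : V + E -> nat) (k : nat) : Prop :=
  [/\ (forall x, 1 <= f x <= #|V| + #|E|),
      injective f,
      (forall m, 1 <= m <= #|V| + #|E| -> exists x, f x = m) &
      (forall e, f (inl (ends e).1) + f (inr e) + f (inl (ends e).2) = k)].

Definition tau {V E : finType} (ends : E -> V * V) (k : nat) : Prop :=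
  exists f, edge_magic ends f k.

Definition asbool (P : Prop) : bool :=
  if excluded_middle_informative P then true else false.

(* |tau_G|: every valence is <= 3(p+q) (when q >= 1), so count valences in [0, 3(p+q)]. *)
Definition tau_card {V E : finType} (ends : E -> V * V) : nat :=
  count (fun k => asbool (tau ends k)) (iota 0 (3 * (#|V| + #|E|)).+1).

Definition is_orientation {V E : finType} (ends o : E -> V * V) : Prop :=
  forall e, o e = ends e \/ o e = ((ends e).2, (ends e).1).

(* K_{1,n}^l : vertices 'I_n.+1 with center 0; edge 0 is the loop (0,0),
   edge i (1 <= i <= n) is the spoke (0,i). *)
Definition star_loop_ends (n : nat) (e : 'I_n.+1) : 'I_n.+1 * 'I_n.+1 := (ord0, e).

Definition tensor_ends {V1 E1 V2 E2 : finType} (oD : E1 -> V1 * V1) (oF : E2 -> V2 * V2)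
  (ef : E1 * E2) : (V1 * V2) * (V1 * V2) :=
  (((oD ef.1).1, (oF ef.2).1), ((oD ef.1).2, (oF ef.2).2)).

(* Main.v *)
Require Import Defs.
From mathcomp Require Import all_boot zify.
From Stdlib Require Import ClassicalEpsilon.
Set Implicit Arguments. Unset Strict Implicit. Unset Printing Implicit Defensive.

Lemma onto_card (T : finType) (F : T -> nat) (M : nat) :
  (forall x, 1 <= F x <= M) -> injective F -> #|T| = M ->
  forall m, 1 <= m <= M -> exists x, F x = m.
Proof.
move=> Hr Hi HT m Hm.
have Hlt x : (F x).-1 < M by have := Hr x; lia.
pose g (x : T) : 'I_M := Ordinal (Hlt x).
have gi : injective g.
  move=> x y /(congr1 val) /= H; apply: Hi; have := Hr x; have := Hr y; lia.
have Hm' : m.-1 < M by lia.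
have := @inj_card_onto _ _ _ gi _ (Ordinal Hm').
rewrite card_ord HT leqnn => /(_ isT) /codomP [x /(congr1 val) /= Hx].
by exists x; have := Hr x; lia.
Qed.

Lemma tau_dual (V E : finType) (ends : E -> V * V) k :
  tau ends k -> tau ends (3 * (#|V| + #|E|).+1 - k).
Proof.
case=> f [Hr Hi Hs He].
exists (fun x => (#|V| + #|E|).+1 - f x); split.
- by move=> x; have := Hr x; lia.
- by move=> x y H; apply: Hi; have := Hr x; have := Hr y; lia.
- apply: onto_card; first by move=> x; have := Hr x; lia.
  + by move=> x y H; apply: Hi; have := Hr x; have := Hr y; lia.
  + by rewrite card_sum.
- move=> e; rewrite -(He e).
  have := Hr (inl (ends e).1); have := Hr (inr e); have := Hr (inl (ends e).2); lia.
Qed.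

Lemma divmod_inj a b a' b' c : a < c -> a' < c -> a + c * b = a' + c * b' -> a = a' /\ b = b'.
Proof.
move=> ha ha' H.
have c0 : 0 < c by lia.
have e1 := congr1 (modn^~ c) H; have e2 := congr1 (divn^~ c) H; move: e1 e2 => /=.
rewrite ![_ + c * _]addnC ![c * _]mulnC !modnMDl !divnMDl // !modn_small // !divn_small //.
by move=> -> ; rewrite !addn0.
Qed.

Lemma asboolT (P : Prop) : P -> asbool P = true.
Proof. by rewrite /asbool; case: excluded_middle_informative. Qed.
Lemma asboolE (P : Prop) : asbool P = true -> P.
Proof. by rewrite /asbool; case: excluded_middle_informative. Qed.

Definition swp n (t i : 'I_n.+1) : 'I_n.+1 := if i == ord0 then t else if i == t then ord0 else i.

Lemma swp_inj n (t : 'I_n.+1) : injective (swp t).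
Proof.
move=> i j; rewrite /swp.
case: (boolP (i == ord0)) => H1; case: (boolP (j == ord0)) => H2;
case: (boolP (i == t)) => H3; case: (boolP (j == t)) => H4;
move: H1 H2 H3 H4 => /eqP H1 /eqP H2 /eqP H3 /eqP H4 H; congruence.
Qed.

Definition rswp {n} (t i : 'I_n.+1) : 'I_n.+1 := rev_ord (swp t i).
Arguments rswp : simpl never.
Lemma rswp_val n (t i : 'I_n.+1) : (rswp t i : nat) = n - swp t i.
Proof. by rewrite /rswp /=; lia. Qed.
Lemma rswp_inj n (t : 'I_n.+1) : injective (rswp t).
Proof. by move=> i j /rev_ord_inj /swp_inj. Qed.

Lemma prod_tau (V E : finType) (ends oG : E -> V * V) n (oK : 'I_n.+1 -> 'I_n.+1 * 'I_n.+1)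
  (HoG : is_orientation ends oG) (HoK : is_orientation (@star_loop_ends n) oK)
  (h : nat -> nat -> nat) (vs : nat -> nat -> nat)
  (hr : forall m j, 1 <= m <= #|V| + #|E| -> j <= n -> 1 <= h m j <= (#|V| + #|E|) * n.+1)
  (hi : forall m j m' j', 1 <= m <= #|V| + #|E| -> j <= n -> 1 <= m' <= #|V| + #|E| -> j' <= n ->
        h m j = h m' j' -> m = m' /\ j = j')
  (hs : forall m1 m2 m3 j1 j2 j3, 1 <= m1 <= #|V| + #|E| -> 1 <= m2 <= #|V| + #|E| ->
        1 <= m3 <= #|V| + #|E| -> j1 <= n -> j2 <= n -> j3 <= n ->
        h m1 j1 + h m2 j2 + h m3 j3 = vs (m1 + m2 + m3) (j1 + j2 + j3))
  k (t : 'I_n.+1) : tau ends k -> tau (tensor_ends oG oK) (vs k (t + n)).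
Proof.
case=> f [Hr Hi Hs He].
pose rv := swp t.
pose re := rswp t.
pose F (z : (V * 'I_n.+1) + (E * 'I_n.+1)) :=
  match z with inl (a, i) => h (f (inl a)) (rv i) | inr (e, s) => h (f (inr e)) (re s) end.
have Fr z : 1 <= F z <= (#|V| + #|E|) * n.+1.
  case: z => [[a i]|[e s]]; apply: hr; rewrite ?Hr ?leq_ord //.
have Finj : injective F.
  move=> [[a1 i1]|[e1 s1]] [[a2 i2]|[e2 s2]] H;
  have [H1 H2] := hi _ _ _ _ (Hr _) (leq_ord _) (Hr _) (leq_ord _) H;
  have := Hi _ _ H1 => // [[->]].
  + by move/val_inj: H2 => /swp_inj ->.
  + by move/val_inj: H2 => /rswp_inj ->.
have Hcard : #|{: V * 'I_n.+1}| + #|{: E * 'I_n.+1}| = (#|V| + #|E|) * n.+1.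
  by rewrite !card_prod card_ord mulnDl.
exists F; rewrite /edge_magic Hcard; split => //.
- apply: onto_card => //.
  by rewrite card_sum -Hcard.
- move=> [e s].
  have Hk : f (inl (oG e).1) + f (inr e) + f (inl (oG e).2) = k.
    by rewrite -(He e); case: (HoG e) => -> /=; lia.
  have Hj : rv (oK s).1 + re s + rv (oK s).2 = t + n.
    have Hr0 : rv ord0 = t by rewrite /rv /swp eqxx.
    have := leq_ord (rv s); rewrite /re rswp_val -/(rv s).
    by case: (HoK s) => -> /=; rewrite /star_loop_ends /= Hr0 /=; lia.
  have := hs (f (inl (oG e).1)) (f (inr e)) (f (inl (oG e).2)) (rv (oK s).1) (re s) (rv (oK s).2)
    (Hr _) (Hr _) (Hr _) (leq_ord _) (leq_ord _) (leq_ord _).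
  by rewrite Hk Hj.
Qed.

Lemma tau_block (V E : finType) (ends oG : E -> V * V) n (oK : 'I_n.+1 -> 'I_n.+1 * 'I_n.+1)
  (HoG : is_orientation ends oG) (HoK : is_orientation (@star_loop_ends n) oK) k (t : 'I_n.+1) :
  tau ends k -> tau (tensor_ends oG oK) ((k - 3) * n.+1 + (t + n) + 3).
Proof.
apply: (@prod_tau V E ends oG n oK HoG HoK (fun m j => (m - 1) * n.+1 + j + 1)
          (fun K J => (K - 3) * n.+1 + J + 3)).
- move=> m j Hm Hj.
  have : (m - 1).+1 * n.+1 <= (#|V| + #|E|) * n.+1 by rewrite leq_mul2r; apply/orP; right; lia.
  rewrite mulSn; move: ((m - 1) * n.+1) ((#|V| + #|E|) * n.+1) => x y; lia.
- move=> m j m' j' Hm Hj Hm' Hj' H.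
  have H' : j + n.+1 * (m - 1) = j' + n.+1 * (m' - 1) by rewrite ![n.+1 * _]mulnC; lia.
  have hj1 : j < n.+1 by lia.
  have hj2 : j' < n.+1 by lia.
  have [-> H2] := divmod_inj hj1 hj2 H'.
  by split => //; lia.
- move=> m1 m2 m3 j1 j2 j3 H1 H2 H3 _ _ _.
  case: m1 H1 => // m1 _; case: m2 H2 => // m2 _; case: m3 H3 => // m3 _.
  have -> : m1.+1 + m2.+1 + m3.+1 - 3 = m1 + m2 + m3 by lia.
  rewrite !subn1 /= !mulnDl; lia.
Qed.

Lemma tau_inter (V E : finType) (ends oG : E -> V * V) n (oK : 'I_n.+1 -> 'I_n.+1 * 'I_n.+1)
  (HoG : is_orientation ends oG) (HoK : is_orientation (@star_loop_ends n) oK) k (t : 'I_n.+1) :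
  tau ends k -> tau (tensor_ends oG oK) (k + (#|V| + #|E|) * (t + n)).
Proof.
apply: (@prod_tau V E ends oG n oK HoG HoK (fun m j => m + (#|V| + #|E|) * j)
          (fun K J => K + (#|V| + #|E|) * J)).
- move=> m j Hm Hj.
  have : (#|V| + #|E|) * j <= (#|V| + #|E|) * n by rewrite leq_mul2l Hj orbT.
  rewrite mulnS; lia.
- move=> m j m' j' Hm Hj Hm' Hj' H.
  have H' : (m - 1) + (#|V| + #|E|) * j = (m' - 1) + (#|V| + #|E|) * j' by lia.
  have hm1 : m - 1 < #|V| + #|E| by lia.
  have hm2 : m' - 1 < #|V| + #|E| by lia.
  have [H1 ->] := divmod_inj hm1 hm2 H'.
  by split => //; lia.
- move=> m1 m2 m3 j1 j2 j3 H1 H2 H3 _ _ _.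
  rewrite !mulnDr; lia.
Qed.

Lemma L1 n N alpha beta : 1 <= n -> N + 2 < alpha -> alpha <= beta -> beta - alpha < (alpha - (N + 2)) * n ->
  beta + N * n < (alpha - 3) * n.+1 + n + 3.
Proof. move=> *; nia. Qed.
Lemma L2 n N alpha beta : 1 <= n -> N + 2 < alpha -> alpha <= beta -> alpha + beta <= 3 * N.+1 -> beta - alpha < (alpha - (N + 2)) * n ->
  (beta - 3) * n.+1 + n + n + 3 < alpha + N * (n + n).
Proof. move=> *; nia. Qed.

Definition phi (N n k : nat) (c : 'I_(n + 3)) : nat :=
  if (c : nat) == 0 then k + N * n else if (c : nat) == 1 then k + N * (n + n)
  else (k - 3) * n.+1 + ((c - 2) + n) + 3.

Theorem mainTheorem3 (V E : finType) (ends : E -> V * V) (n : nat) (hn : 1 <= n)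
  (alpha beta : nat)
  (Halpha : tau ends alpha) (Hbeta : tau ends beta)
  (Hbounds : forall k, tau ends k -> alpha <= k <= beta)
  (Hineq : beta - alpha < (alpha - (#|V| + #|E| + 2)) * n)
  (oG : E -> V * V) (HoG : is_orientation ends oG)
  (oK : 'I_n.+1 -> 'I_n.+1 * 'I_n.+1) (HoK : is_orientation (@star_loop_ends n) oK) :
  (n + 3) * tau_card ends <= tau_card (tensor_ends oG oK).
Proof.
have HaN : #|V| + #|E| + 2 < alpha.
  case: (leqP alpha (#|V| + #|E| + 2)) => // h.
  by move: Hineq; rewrite (_ : alpha - _ = 0) ?mul0n //; apply/eqP; rewrite subn_eq0.
have Hab : alpha <= beta by have /andP[] := Hbounds _ Halpha.
have Hsum : alpha + beta <= 3 * (#|V| + #|E|).+1.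
  by have /andP[h _] := Hbounds _ (tau_dual Hbeta); lia.
have H1 := L1 hn HaN Hab Hineq.
have H2 := L2 hn HaN Hab Hsum Hineq.
set N := #|V| + #|E| in HaN Hsum H1 H2 Hineq.
set S := [seq k <- iota 0 (3 * N).+1 | asbool (tau ends k)].
have HS k : k \in S -> [/\ tau ends k, alpha <= k, k <= beta & k <= 3 * N].
  rewrite mem_filter mem_iota => /andP[/asboolE Hk /andP[_ Hk2]].
  by have /andP[h1 h2] := Hbounds _ Hk; split => //; lia.
set T := [seq @phi N n k c | k <- S, c <- enum 'I_(n + 3)].
rewrite /tau_card -!size_filter.
have -> : (n + 3) * size S = size T by rewrite size_allpairs size_enum_ord mulnC.
apply: uniq_leq_size.
- apply: allpairs_uniq; [exact: filter_uniq (iota_uniq _ _)| exact: enum_uniq |].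
  move=> [k1 c1] [k2 c2] /allpairsP[[k1' c1'] [/= Hk1 _ [-> ->]]]
    /allpairsP[[k2' c2'] [/= Hk2 _ [-> ->]]] /=.
  have [_ a1 b1 _] := HS _ Hk1; have [_ a2 b2 _] := HS _ Hk2.
  have m1 : (alpha - 3) * n.+1 <= (k1' - 3) * n.+1 by rewrite leq_mul2r; apply/orP; right; lia.
  have m2 : (k1' - 3) * n.+1 <= (beta - 3) * n.+1 by rewrite leq_mul2r; apply/orP; right; lia.
  have m3 : (alpha - 3) * n.+1 <= (k2' - 3) * n.+1 by rewrite leq_mul2r; apply/orP; right; lia.
  have m4 : (k2' - 3) * n.+1 <= (beta - 3) * n.+1 by rewrite leq_mul2r; apply/orP; right; lia.
  have o1 := ltn_ord c1'; have o2 := ltn_ord c2'.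
  move=> H; suff [-> /val_inj ->] : k1' = k2' /\ (c1' : nat) = c2' by [].
  move: H; rewrite /phi.
  case: (c1' : nat) o1 => [|[|d1]] o1; case: (c2' : nat) o2 => [|[|d2]] o2 /= H; try lia.
  have H' : d1 + n.+1 * (k1' - 3) = d2 + n.+1 * (k2' - 3).
    by move: H; rewrite ![n.+1 * _]mulnC; lia.
  have hc1 : d1 < n.+1 by lia.
  have hc2 : d2 < n.+1 by lia.
  have [-> e] := divmod_inj hc1 hc2 H'; lia.
- move=> x /allpairsP[[k c] [Hk _ ->]]; simpl in Hk.
  have [Htk a b k3] := HS _ Hk.
  have oc := ltn_ord c.
  rewrite mem_filter mem_iota; apply/andP; split.
  + apply: asboolT; rewrite /phi.
    case: eqP => [_|c0]; first exact: (tau_inter HoG HoK ord0 Htk).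
    case: eqP => [_|c1]; first exact: (tau_inter HoG HoK ord_max Htk).
    have := tau_block HoG HoK (inord (c - 2)) Htk; rewrite inordK; [by []|lia].
  + rewrite !card_prod card_ord add0n /phi /=.
    have mk : (k - 3) * n.+1 <= (3 * N - 3) * n.+1 by rewrite leq_mul2r; apply/orP; right; lia.
    have e1 : 3 * (#|V| * n.+1 + #|E| * n.+1) = 3 * N * n + 3 * N by rewrite /N; nia.
    have e2 : (3 * N - 3) * n.+1 + 3 * n + 3 <= 3 * N * n + 3 * N by nia.
    rewrite e1; case: eqP => _; first nia.
    case: eqP => _; first nia.
    lia.
Qed.
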